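(* Let $X$ be a nonempty $T_0$-space and $Y$ a $T_0$-space. If the space $[X,Y]$ is $S^{\ast}$-well-filtered, then $Y$ is $S^{\ast}$-well-filtered.
   Context: $[X,Y]$ denotes the set $\mathrm{TOP}(X,Y)$ of continuous maps $X\to Y$ endowed with the Isbell topology, generated by the subbasic sets $N(H\leftarrow V)=\{f\mid f^{-1}(V)\in H\}$ where $H$ is a Scott open subset of the complete lattice $\mathcal{O}(X)$ of open sets of $X$ and $V$ is open in $Y$. For a space $Z$, ${\uparrow}$ is taken in the specialization order ($x\le y$ iff $x\in cl\{y\}$); $K(Z)$ is the set of nonempty compact saturated (= upper) subsets; a family in $K(Z)$ is filtered if any two members contain a common member. $Z$ is $S^{\ast}$-well-filtered if for every filtered family $\{K_i\mid i\in I\}\subseteq K(Z)$, every $G\in K(Z)$ and every nonempty open $U$, $\bigcap_{i}K_i\cap G\subseteq U$ implies $K_i\cap G\subseteq U$ for some $i$. *)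

(* Defs.v *)
From Stdlib Require Import List.



Definition subset {T} (A B : T -> Prop) : Prop := forall x, A x -> B x.

Definition is_topology {T : Type} (O : (T -> Prop) -> Prop) : Prop :=
  O (fun _ => True) /\
  (forall A B, O A -> O B -> O (fun x => A x /\ B x)) /\
  (forall F : (T -> Prop) -> Prop, (forall A, F A -> O A) ->
      O (fun x => exists A, F A /\ A x)).

Record space := Space {
  pt :> Type;
  opn : (pt -> Prop) -> Prop;
  opn_topology : is_topology opn
}.

Section Generic.
Variables (T : Type) (O : (T -> Prop) -> Prop).

Definition T0 : Prop :=
  forall x y : T, (forall U, O U -> (U x <-> U y)) -> x = y.

Definition spec_le (x y : T) : Prop := forall U, O U -> U x -> U y.

Definition saturated (A : T -> Prop) : Prop :=
  forall x y, A x -> spec_le x y -> A y.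

Definition compact (A : T -> Prop) : Prop :=
  forall (I : Type) (U : I -> T -> Prop), (forall i, O (U i)) ->
    subset A (fun x => exists i, U i x) ->
    exists l : list I, subset A (fun x => exists i, In i l /\ U i x).

Definition Kset (A : T -> Prop) : Prop :=
  (exists x, A x) /\ compact A /\ saturated A.

Definition filtered_K (F : (T -> Prop) -> Prop) : Prop :=
  (exists A, F A) /\ (forall A, F A -> Kset A) /\
  (forall A B, F A -> F B -> exists C, F C /\ subset C A /\ subset C B).

Definition S_star_WF : Prop :=
  forall F : (T -> Prop) -> Prop, filtered_K F ->
  forall G : T -> Prop, Kset G ->
  forall U : T -> Prop, O U -> (exists x, U x) ->
  subset (fun x => (forall A, F A -> A x) /\ G x) U ->
  exists A, F A /\ subset (fun x => A x /\ G x) U.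

End Generic.

Section FunctionSpace.
Variables X Y : space.

Definition continuous (f : X -> Y) : Prop :=
  forall V, opn Y V -> opn X (fun x => V (f x)).

Definition cmap := { f : X -> Y | continuous f }.

Definition directed_opens (D : (X -> Prop) -> Prop) : Prop :=
  (exists U, D U) /\ (forall U, D U -> opn X U) /\
  (forall U V, D U -> D V -> exists W, D W /\ subset U W /\ subset V W).

Definition scott_open (H : (X -> Prop) -> Prop) : Prop :=
  (forall U, H U -> opn X U) /\
  (forall U V, H U -> opn X V -> subset U V -> H V) /\
  (forall D, directed_opens D ->
     H (fun x => exists U, D U /\ U x) -> exists U, D U /\ H U).

Definition isbell_subbasic (S : cmap -> Prop) : Prop :=
  exists H V, scott_open H /\ opn Y V /\
    S = (fun f : cmap => H (fun x => V (proj1_sig f x))).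

Definition isbell_open (G : cmap -> Prop) : Prop :=
  forall O : (cmap -> Prop) -> Prop, is_topology O ->
    (forall S, isbell_subbasic S -> O S) -> O G.

End FunctionSpace.

(* Main.v *)
Require Import Defs.
From Stdlib Require Import List Classical FunctionalExtensionality PropExtensionality.

Lemma opn_ext (S : space) (A B : S -> Prop) :
  opn S A -> (forall x, A x <-> B x) -> opn S B.
Proof.
  intros HA HAB.
  assert (E : A = B).
  { apply functional_extensionality; intro x; apply propositional_extensionality; apply HAB. }
  now subst.
Qed.

Lemma opn_const (S : space) (P : Prop) : opn S (fun _ => P).
Proof.
  destruct (opn_topology S) as [HT [HI HU]].
  destruct (classic P) as [p|np].
  - apply (opn_ext S (fun _ => True)); auto. intuition.
  - apply (opn_ext S (fun x => exists A, (fun _ : S -> Prop => False) A /\ A x)).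
    + apply HU. intros A [].
    + intros x; split; [intros [A [[] _]] | intros p; contradiction].
Qed.

Section Main.
Variables X Y : space.
Variable x0 : X.

Definition cst (y : Y) : cmap X Y.
Proof. exists (fun _ => y). intros V _. apply opn_const. Defined.

Definition Hx0 : (X -> Prop) -> Prop := fun W => opn X W /\ W x0.

Lemma Hx0_scott : scott_open X Hx0.
Proof.
  split; [|split].
  - intros U [h _]; exact h.
  - intros U V [_ h] hV s. split; auto.
  - intros D HDir [_ [U [DU Ux]]]. exists U. split; auto.
    split; auto. destruct HDir as [_ [HD _]]. auto.
Qed.

Definition W (U : Y -> Prop) : cmap X Y -> Prop :=
  fun f => Hx0 (fun x => U (proj1_sig f x)).

Lemma W_open U : opn Y U -> isbell_open X Y (W U).
Proof.
  intros hU O _ Hsub. apply Hsub. exists Hx0, U. split; [apply Hx0_scott|split; auto].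
Qed.

Lemma W_iff U (f : cmap X Y) : opn Y U -> (W U f <-> U (proj1_sig f x0)).
Proof.
  intros hU. unfold W, Hx0. split; [tauto|]. intros h; split; auto.
  destruct f as [f cf]; simpl in *. apply cf; auto.
Qed.

Lemma cst_cont G : isbell_open X Y G -> opn Y (fun y => G (cst y)).
Proof.
  intros hG. apply (hG (fun G => opn Y (fun y => G (cst y)))).
  - destruct (opn_topology Y) as [HT [HI HU]]. split; [|split].
    + exact HT.
    + intros A B hA hB. apply HI; auto.
    + intros F hF.
      apply (opn_ext Y (fun y => exists A', (fun A' => exists A, F A /\ A' = (fun y => A (cst y))) A' /\ A' y)).
      * apply HU. intros A' [A [FA e]]. subst. auto.
      * intros y; split.
        -- intros [A' [[A [FA e]] h]]. subst. eauto.
        -- intros [A [FA h]]. exists (fun y => A (cst y)). split; eauto.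
  - intros S [H [V [Hs [hV e]]]]. subst S. simpl.
    destruct Hs as [Hop [Hup _]].
    destruct (classic (H (fun _ => False))) as [h0|h0].
    + apply (opn_ext Y (fun _ => True)). apply opn_const.
      intros y; split; auto. intros _. apply (Hup _ _ h0). apply opn_const. intros x [].
    + destruct (classic (H (fun _ => True))) as [h1|h1].
      * apply (opn_ext Y V); auto. intros y; split.
        -- intros v. apply (Hup _ _ h1). apply opn_const. intros x _; exact v.
        -- intros h. destruct (classic (V y)) as [v|nv]; auto.
           exfalso; apply h0. apply (Hup _ _ h). apply opn_const. intros x v; exact (nv v).
      * apply (opn_ext Y (fun _ => False)). apply opn_const.
        intros y; split; [intros []|]. intros h. apply h1.
        apply (Hup _ _ h). apply opn_const. intros ? ?; exact I.
Qed.

Definition upc (A : Y -> Prop) : cmap X Y -> Prop :=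
  fun f => exists y, A y /\ spec_le (cmap X Y) (isbell_open X Y) (cst y) f.

Lemma ev_mono (y : Y) f : spec_le _ (isbell_open X Y) (cst y) f ->
  spec_le Y (opn Y) y (proj1_sig f x0).
Proof.
  intros h V hV Vy. apply (proj1 (W_iff V f hV)). apply h. apply W_open; auto.
  apply (proj2 (W_iff V (cst y) hV)). exact Vy.
Qed.

Lemma upc_K A : Kset Y (opn Y) A -> Kset _ (isbell_open X Y) (upc A).
Proof.
  intros [[a Aa] [cA sA]]. split; [|split].
  - exists (cst a). exists a. split; auto. intros V _ h; exact h.
  - intros I U hU cov.
    destruct (cA I (fun i y => U i (cst y))) as [l hl].
    + intros i. apply cst_cont. auto.
    + intros y Ay. apply cov. exists y. split; auto. intros V _ h; exact h.
    + exists l. intros f [y [Ay le]]. destruct (hl y Ay) as [i [il Ui]].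
      exists i. split; auto. apply le; auto.
  - intros f g [y [Ay le]] le2. exists y. split; auto. intros V hV h. apply le2; auto. apply le; auto.

Qed.

End Main.

Theorem mainTheorem18 (X Y : space) :
  inhabited (pt X) -> @T0 (pt X) (opn X) -> @T0 (pt Y) (opn Y) ->
  @S_star_WF (cmap X Y) (isbell_open X Y) -> @S_star_WF (pt Y) (opn Y).
Proof.
  intros [x0] _ _ HWF F [[A0 FA0] [FK Ffil]] G HG U hU [u Uu] Hsub.
  set (F' := fun B => exists A, F A /\ B = upc X Y A).
  assert (HF' : filtered_K _ (isbell_open X Y) F').
  { split; [|split].
    - exists (upc X Y A0). exists A0; auto.
    - intros B [A [FA e]]. subst. apply upc_K; auto.
    - intros B1 B2 [A1 [F1 e1]] [A2 [F2 e2]]. subst.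
      destruct (Ffil A1 A2 F1 F2) as [C [FC [s1 s2]]].
      exists (upc X Y C). split; [exists C; auto|].
      split; intros f [y [Cy le]]; exists y; split; auto. }
  assert (hne : exists f, W X Y x0 U f).
  { exists (cst X Y u). apply (proj2 (W_iff X Y x0 U _ hU)). exact Uu. }
  assert (hs : subset (fun f => (forall B, F' B -> B f) /\ upc X Y G f) (W X Y x0 U)).
  { intros f [hF hG]. apply (proj2 (W_iff X Y x0 U _ hU)). apply Hsub. split.
    + intros A FA. destruct (hF (upc X Y A) ltac:(exists A; auto)) as [y [Ay le]].
      destruct (FK A FA) as [_ [_ sA]]. apply (sA y); auto.
      apply (ev_mono X Y x0 y f le).
    + destruct hG as [y [Gy le]]. destruct HG as [_ [_ sG]]. apply (sG y); auto.
      apply (ev_mono X Y x0 y f le). }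
  destruct (HWF F' HF' (upc X Y G) (upc_K X Y G HG) (W X Y x0 U)
              (W_open X Y x0 U hU) hne hs) as [B [[A [FA e]] hB]].
  subst B. exists A. split; auto. intros y [Ay Gy].
  assert (h : W X Y x0 U (cst X Y y)).
  { apply hB. split; exists y; split; auto; intros V _ h; exact h. }
  apply (proj1 (W_iff X Y x0 U _ hU)) in h. exact h.
Qed.
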